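(* Let $\Omega\subset\mathbb H^n$ be an open set and let $u:\Omega\to\mathbb R$ be continuous with $\partial_Hu(\xi)\neq\emptyset$ for every $\xi\in\Omega$. Then the set-valued map $\partial_Hu:\Omega\to 2^{\mathbb R^{2n}}$ is upper semicontinuous on $\Omega$. Moreover, for every compact set $K\subset\Omega$, the set $\partial_Hu(K)$ is compact.
   Context: $\mathbb H^n=\mathbb C^n\times\mathbb R\cong\mathbb R^{2n+1}$ with real coordinates $(x,y,t)$, $z=x+iy$, group law $(z,t)\circ(z',t')=(z+z',t+t'+2\,\mathrm{Im}\langle z,z'\rangle)$, $\langle z,z'\rangle=\sum_j z_j\overline{z'_j}$. Horizontal plane at $\xi_0=(x_0,y_0,t_0)$: $H_{\xi_0}=\{(x,y,t):t=t_0+2(x\cdot y_0-x_0\cdot y)\}$. $\mathrm{Pr}_1(x,y,t)=(x,y)$. For $\xi_0\in\Omega$, $\partial_Hu(\xi_0)=\{p\in\mathbb R^{2n}:u(\xi)\ge u(\xi_0)+p\cdot(\mathrm{Pr}_1(\xi)-\mathrm{Pr}_1(\xi_0))\ \forall\xi\in\Omega\cap H_{\xi_0}\}$ (a compact convex set), and $\partial_Hu(K)=\bigcup_{\xi\in K}\partial_Hu(\xi)$. A set-valued map $F$ with nonempty compact values is upper semicontinuous at $x$ if for every $\varepsilon>0$ there is $\delta>0$ such that $F(x')$ is contained in the $\varepsilon$-neighbourhood of $F(x)$ whenever $x'$ is within distance $\delta$ of $x$. *)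

(* Defs.v *)
From HB Require Import structures.
From mathcomp Require Import all_boot all_order all_algebra.
From mathcomp Require Import all_classical all_reals all_analysis.
Set Implicit Arguments. Unset Strict Implicit. Unset Printing Implicit Defensive.
Import Order.TTheory GRing.Theory Num.Theory.
Import numFieldNormedType.Exports.
Local Open Scope classical_set_scope.
Local Open Scope ring_scope.

(* The Heisenberg group H^n = C^n x R ~ R^{2n+1}, points ((x, y), t)
   with x, y in R^n (row vectors) and t in R; z = x + i y. *)
Notation Hn R n := (('rV[R]_n * 'rV[R]_n) * R)%type.

Notation R2n R n := ('rV[R]_n * 'rV[R]_n)%type.

Definition dotv (R : realType) (n : nat) (a b : 'rV[R]_n) : R :=
  \sum_(i < n) a 0 i * b 0 i.

Definition Pr1 (R : realType) (n : nat) (xi : Hn R n) : R2n R n := xi.1.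

Definition dot2 (R : realType) (n : nat) (p q : R2n R n) : R :=
  dotv p.1 q.1 + dotv p.2 q.2.

Definition hplane (R : realType) (n : nat) (xi0 : Hn R n) : set (Hn R n) :=
  [set xi | xi.2 = xi0.2 + 2 * (dotv xi.1.1 xi0.1.2 - dotv xi0.1.1 xi.1.2)].

Definition hsubdiff (R : realType) (n : nat) (Omega : set (Hn R n))
    (u : Hn R n -> R) (xi0 : Hn R n) : set (R2n R n) :=
  [set p | forall xi, Omega xi -> hplane xi0 xi ->
     u xi0 + dot2 p (Pr1 xi - Pr1 xi0) <= u xi].

Definition hsubdiff_set (R : realType) (n : nat) (Omega : set (Hn R n))
    (u : Hn R n -> R) (K : set (Hn R n)) : set (R2n R n) :=
  \bigcup_(xi in K) hsubdiff Omega u xi.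

Definition dist2n (R : realType) (n : nat) (p q : R2n R n) : R :=
  Num.sqrt (dot2 (p - q) (p - q)).

Definition distH (R : realType) (n : nat) (xi eta : Hn R n) : R :=
  Num.sqrt (dot2 (Pr1 xi - Pr1 eta) (Pr1 xi - Pr1 eta) + (xi.2 - eta.2) ^+ 2).

Definition eps_nbhd (R : realType) (n : nat) (A : set (R2n R n)) (eps : R)
  : set (R2n R n) :=
  [set q | exists2 p, A p & dist2n p q < eps].

Definition usc_at (R : realType) (n : nat) (Omega : set (Hn R n))
    (F : Hn R n -> set (R2n R n)) (x : Hn R n) : Prop :=
  forall eps : R, 0 < eps -> exists2 delta : R, 0 < delta &
    forall x', Omega x' -> distH x x' < delta -> F x' `<=` eps_nbhd (F x) eps.

(* Main.v *)
Require Import Defs.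
From HB Require Import structures.
From mathcomp Require Import all_boot all_order all_algebra.
From mathcomp Require Import all_classical all_reals all_analysis.
From mathcomp Require Import ring lra.
Import Order.TTheory GRing.Theory Num.Theory.
Import numFieldNormedType.Exports.
Local Open Scope classical_set_scope.
Local Open Scope ring_scope.
Section S.
Context {R : realType} {n : nat}.
Implicit Types (a b : 'rV[R]_n) (p q : R2n R n) (x y : Hn R n).

Lemma rv_le (v : 'rV[R]_n) i : `|v 0 i| <= `|v|.
Proof.
have /mapP[j Hj ->] : `|v ord0 i| \in [seq `|v x.1 x.2| | x : 'I_1 * 'I_n].
  by apply/mapP; exists (ord0, i) => //=; rewrite mem_enum.
by rewrite [leRHS]/Num.norm /= mx_normrE; apply/bigmax_geP; right => /=; exists j.
Qed.

Lemma rv_ge (v : 'rV[R]_n) c : 0 <= c -> (forall i, `|v 0 i| <= c) -> `|v| <= c.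
Proof.
move=> c0 H; rewrite [leLHS]/Num.norm /= mx_normrE.
apply: bigmax_le => // -[a b] _ /=; rewrite (ord1 a); exact: H.
Qed.

Lemma pair_le1 {U V : normedModType R} (z : U * V) : `|z.1| <= `|z|.
Proof. by rewrite prod_normE le_max lexx. Qed.
Lemma pair_le2 {U V : normedModType R} (z : U * V) : `|z.2| <= `|z|.
Proof. by rewrite prod_normE le_max lexx orbT. Qed.
Lemma pair_ge {U V : normedModType R} (z : U * V) c :
  `|z.1| <= c -> `|z.2| <= c -> `|z| <= c.
Proof. by rewrite prod_normE ge_max => -> ->. Qed.

Lemma dotvBl a b (c : 'rV[R]_n) : dotv (a - b) c = dotv a c - dotv b c.
Proof. by rewrite /dotv -sumrB; apply: eq_bigr => i _; rewrite !mxE mulrBl. Qed.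
Lemma dotvBr a b (c : 'rV[R]_n) : dotv a (b - c) = dotv a b - dotv a c.
Proof. by rewrite /dotv -sumrB; apply: eq_bigr => i _; rewrite !mxE mulrBr. Qed.
Lemma dotvDl a b (c : 'rV[R]_n) : dotv (a + b) c = dotv a c + dotv b c.
Proof. by rewrite /dotv -big_split; apply: eq_bigr => i _; rewrite !mxE mulrDl. Qed.
Lemma dotvDr a b (c : 'rV[R]_n) : dotv a (b + c) = dotv a b + dotv a c.
Proof. by rewrite /dotv -big_split; apply: eq_bigr => i _; rewrite !mxE mulrDr. Qed.
Lemma dotvZr a b (k : R) : dotv a (k *: b) = k * dotv a b.
Proof. by rewrite /dotv mulr_sumr; apply: eq_bigr => i _; rewrite !mxE mulrCA. Qed.

Lemma dotv_bound a b : `|dotv a b| <= n%:R * (`|a| * `|b|).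
Proof.
rewrite /dotv; apply: le_trans (ler_norm_sum _ _ _) _.
have -> : n%:R * (`|a| * `|b|) = \sum_(i < n) (`|a| * `|b|).
  by rewrite sumr_const card_ord mulr_natl.
by apply: ler_sum => i _; rewrite normrM ler_pM // rv_le.
Qed.

Lemma dot2_bound p q : `|dot2 p q| <= 2 * n%:R * (`|p| * `|q|).
Proof.
rewrite /dot2; apply: le_trans (ler_normD _ _) _.
have h1 := dotv_bound p.1 q.1; have h2 := dotv_bound p.2 q.2.
have a1 := pair_le1 p; have a2 := pair_le2 p; have b1 := pair_le1 q; have b2 := pair_le2 q.
have n0 : 0 <= n%:R :> R by [].
have e1 : `|p.1| * `|q.1| <= `|p| * `|q| by rewrite ler_pM.
have e2 : `|p.2| * `|q.2| <= `|p| * `|q| by rewrite ler_pM.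
have f1 := ler_wpM2l n0 e1; have f2 := ler_wpM2l n0 e2.
lra.
Qed.

Lemma dot2Br p q (r : R2n R n) : dot2 p (q - r) = dot2 p q - dot2 p r.
Proof. rewrite /dot2 /= !dotvBr; lra. Qed.
Lemma dot2Bl p q (r : R2n R n) : dot2 (p - q) r = dot2 p r - dot2 q r.
Proof. rewrite /dot2 /= !dotvBl; lra. Qed.
Lemma dot2Zr p q (k : R) : dot2 p (k *: q) = k * dot2 p q.
Proof. by rewrite /dot2 /= !dotvZr mulrDr. Qed.

Lemma dotv_sq_ge a i : a 0 i ^+ 2 <= dotv a a.
Proof.
rewrite /dotv (bigD1 i) //= expr2 lerDl; apply: sumr_ge0 => j _.
by rewrite -expr2 sqr_ge0.
Qed.
Lemma dotv_ge0 a : 0 <= dotv a a.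
Proof. by apply: sumr_ge0 => j _; rewrite -expr2 sqr_ge0. Qed.

Lemma ent_le_sqrt a i s : dotv a a <= s -> `|a 0 i| <= Num.sqrt s.
Proof.
move=> h; rewrite -sqrtr_sqr.
rewrite ler_sqrt; last by apply: le_trans h; exact: dotv_ge0.
exact: le_trans (dotv_sq_ge a i) h.
Qed.

Lemma rv_le_sqrt a s : dotv a a <= s -> `|a| <= Num.sqrt s.
Proof. by move=> h; apply: rv_ge => // i; apply: ent_le_sqrt. Qed.

Lemma norm_le_dot2 p : `|p| <= Num.sqrt (dot2 p p).
Proof.
have g1 := dotv_ge0 p.1; have g2 := dotv_ge0 p.2.
apply: pair_ge; apply: rv_le_sqrt; rewrite /dot2; lra.
Qed.

Lemma norm_le_distH x y : `|x - y| <= distH x y.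
Proof.
rewrite /distH.
set w := Pr1 x - Pr1 y.
have g1 := dotv_ge0 w.1; have g2 := dotv_ge0 w.2.
have g3 := sqr_ge0 (x.2 - y.2).
apply: pair_ge; [apply: pair_ge; apply: rv_le_sqrt; rewrite /dot2 /w /=; lra|].
rewrite /= -sqrtr_sqr ler_sqrt; last by rewrite /dot2; lra.
rewrite /dot2; lra.
Qed.


Definition tpt x q : Hn R n := (q, x.2 + 2 * (dotv q.1 x.1.2 - dotv x.1.1 q.2)).

Lemma tpt_plane x q : hplane x (tpt x q).
Proof. by []. Qed.

Lemma tpt_diff x y q : `|tpt x q - tpt y q| <= `|x - y| * (1 + 4 * n%:R * `|q|).
Proof.
have q1 := pair_le1 q; have q2 := pair_le2 q.
have d1 := pair_le1 (x - y); have d2 := pair_le2 (x - y).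
have d11 := pair_le1 (x - y).1; have d12 := pair_le2 (x - y).1.
have n0 : 0 <= n%:R :> R by [].
have g0 : 0 <= `|x - y| by [].
have gq : 0 <= `|q| by [].
apply: pair_ge => /=.
  by rewrite subrr normr0 mulr_ge0 // addr_ge0 // !mulr_ge0.
have -> : x.2 + 2 * (dotv q.1 x.1.2 - dotv x.1.1 q.2) -
   (y.2 + 2 * (dotv q.1 y.1.2 - dotv y.1.1 q.2)) =
   (x - y).2 + 2 * (dotv q.1 (x - y).1.2 - dotv (x - y).1.1 q.2).
  by rewrite /= dotvBr dotvBl; ring.
have b1 := dotv_bound q.1 (x - y).1.2; have b2 := dotv_bound (x - y).1.1 q.2.
have e1 : `|q.1| * `|(x - y).1.2| <= `|q| * `|x - y| by rewrite ler_pM //; lra.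
have e2 : `|(x - y).1.1| * `|q.2| <= `|x - y| * `|q| by rewrite ler_pM //; lra.
have f1 := ler_wpM2l n0 e1; have f2 := ler_wpM2l n0 e2.
set A := (x - y).2; set B := dotv q.1 (x - y).1.2; set C := dotv (x - y).1.1 q.2.
have hA : `|A| <= `|x - y| by [].
have := ler_normD A (2 * (B - C)); rewrite normrM (ger0_norm (_ : 0 <= 2)) //.
have := ler_normB B C.
nra.
Qed.

Lemma tpt_near x d : `|tpt x (Pr1 x + d) - x| <= `|d| * (1 + 4 * n%:R * `|x|).
Proof.
have x1 := pair_le1 x; have x2 := pair_le2 x.
have x11 := pair_le1 x.1; have x12 := pair_le2 x.1.
have e1 := pair_le1 d; have e2 := pair_le2 d.
have n0 : 0 <= n%:R :> R by [].
have g0 : 0 <= `|d| by [].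
have gx : 0 <= `|x| by [].
apply: pair_ge => /=.
  rewrite /Pr1 addrAC subrr add0r; have := mulr_ge0 n0 gx; nra.
have -> : x.2 + 2 * (dotv (x.1 + d).1 x.1.2 - dotv x.1.1 (x.1 + d).2) - x.2 =
   2 * (dotv d.1 x.1.2 - dotv x.1.1 d.2).
  by rewrite /= dotvDl dotvDr; ring.
have b1 := dotv_bound d.1 x.1.2; have b2 := dotv_bound x.1.1 d.2.
have h1 : `|d.1| * `|x.1.2| <= `|d| * `|x| by rewrite ler_pM //; lra.
have h2 : `|x.1.1| * `|d.2| <= `|x| * `|d| by rewrite ler_pM //; lra.
have f1 := ler_wpM2l n0 h1; have f2 := ler_wpM2l n0 h2.
set B := dotv d.1 x.1.2; set C := dotv x.1.1 d.2.
rewrite normrM (ger0_norm (_ : 0 <= 2)) //.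
have := ler_normB B C.
nra.
Qed.
Lemma cont_ball (Omega : set (Hn R n)) (u : Hn R n -> R) :
  open Omega -> {within Omega, continuous u} -> forall x, Omega x ->
  forall e, 0 < e -> exists2 r, 0 < r & forall y, `|x - y| < r -> Omega y /\ `|u x - u y| < e.
Proof.
move=> oO cu x Ox e e0.
rewrite (continuous_open_subspace _ oO) in cu.
have cx := cu x (mem_set Ox).
have h1 : \forall y \near x, `|u x - u y| < e.
  exact: ((@cvgrPdist_lt R R^o (Hn R n) (nbhs x) _ u (u x)).1 cx e e0).
have h2 : \forall y \near x, Omega y by exact: oO.
have h3 : \forall y \near x, Omega y /\ `|u x - u y| < e by exact: filterI.
have [r /= r0 H] := (nbhs_normP x _).1 h3.
by exists r => // y xy; apply: (H y).
Qed.
Lemma dot2_ge0 (p : R2n R n) : 0 <= dot2 p p.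
Proof. by rewrite /dot2 addr_ge0 // dotv_ge0. Qed.

Lemma normsq_le_dot2 (p : R2n R n) : `|p| ^+ 2 <= dot2 p p.
Proof.
have h := norm_le_dot2 p.
rewrite -(sqr_sqrtr (dot2_ge0 p)) lerXn2r // ?nnegrE //.
Qed.

Lemma locbound (Omega : set (Hn R n)) (u : Hn R n -> R) :
  open Omega -> {within Omega, continuous u} -> forall x, Omega x ->
  exists M, exists2 rho, 0 < rho & forall x', `|x - x'| < rho ->
    forall p, hsubdiff Omega u x' p -> `|p| <= M.
Proof.
move=> oO cu x Ox.
have [r r0 H] := cont_ball _ _ oO cu _ Ox _ ltr01.
have n0 : 0 <= n%:R :> R by [].
have gx : 0 <= `|x| by [].
pose K := 1 + 4 * n%:R * (`|x| + 1).
have K0 : 0 < K by rewrite /K; have := mulr_ge0 n0 gx; nra.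
pose h := r / (2 * K).
have h0 : 0 < h by rewrite /h divr_gt0 // mulr_gt0.
have hK : h * K = r / 2.
  by rewrite /h; field; rewrite (gt_eqF K0).
exists (2 / h); exists (Num.min (r / 2) 1); first by rewrite lt_min ltr01 divr_gt0.
move=> x' xx' p hp.
have [xr x1] : `|x - x'| < r / 2 /\ `|x - x'| < 1 by move: xx'; rewrite lt_min => /andP[].
have r2 : r / 2 < r by lra.
have [Ox' ux'] := H x' (lt_trans xr r2).
have [->|p0] := eqVneq p 0; first by rewrite normr0 ltW // divr_gt0.
have np0 : 0 < `|p| by rewrite normr_gt0.
pose k := h / `|p|.
have k0 : 0 < k by rewrite /k divr_gt0.
have kp : k * `|p| = h by rewrite /k divfK // gt_eqF.
pose d : R2n R n := k *: p.
have nd : `|d| = h by rewrite /d normrZ gtr0_norm.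
pose eta := tpt x' (Pr1 x' + d).
have hx' : `|x'| <= `|x| + 1.
  have := ler_normB x (x - x'); rewrite opprB addrC subrK; lra.
have heta : `|eta - x'| <= r / 2.
  apply: le_trans (tpt_near x' d) _; rewrite nd -hK /K.
  apply: ler_wpM2l; first exact: ltW.
  apply: lerD => //; apply: ler_wpM2l => //; exact: mulr_ge0.
have [Oeta ueta] : Omega eta /\ `|u x - u eta| < 1.
  apply: H; have := ler_distD x' x eta; rewrite (distrC x' eta); lra.
have := hp eta Oeta (tpt_plane x' _).
have -> : Pr1 eta - Pr1 x' = d by rewrite /eta /tpt /Pr1 /= addrC addKr.
rewrite /d dot2Zr.
have hpp := normsq_le_dot2 p.
have : k * `|p| ^+ 2 <= k * dot2 p p by rewrite ler_pM2l.
rewrite expr2 mulrA kp => hk hh.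
have hhp : h * `|p| < 2.
  move: ux' ueta; rewrite !ltr_norml => /andP[a1 a2] /andP[b1 b2]; lra.
by rewrite ler_pdivlMr // mulrC ltW.
Qed.
Lemma graph_open (Omega : set (Hn R n)) (u : Hn R n -> R) :
  open Omega -> {within Omega, continuous u} -> forall x p, Omega x ->
  ~ hsubdiff Omega u x p ->
  exists2 del, 0 < del & forall x' p', `|x - x'| < del -> `|p - p'| < del ->
    ~ hsubdiff Omega u x' p'.
Proof.
move=> oO cu x p Ox hp.
have [eta [Oeta [Heta Hlt]]] : exists eta, Omega eta /\ hplane x eta /\
    u eta < u x + dot2 p (Pr1 eta - Pr1 x).
  apply: contrapT => hn; apply: hp => xi Oxi Hxi.
  rewrite leNgt; apply/negP => hlt; apply: hn; exists xi; tauto.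
pose q0 := Pr1 eta.
have etaE : eta = tpt x q0 by rewrite /tpt /q0 /Pr1 -Heta -surjective_pairing.
pose w := q0 - Pr1 x.
pose g := u x + dot2 p w - u eta.
have g0 : 0 < g by rewrite /g /w /q0; lra.
have g4 : 0 < g / 4 by rewrite divr_gt0.
have [r1 r10 H1] := cont_ball _ _ oO cu _ Oeta _ g4.
have [r2 r20 H2] := cont_ball _ _ oO cu _ Ox _ g4.
have n0 : 0 <= n%:R :> R by [].
pose K1 := 1 + 4 * n%:R * `|q0|.
have K10 : 0 < K1 by rewrite /K1; have := mulr_ge0 n0 (normr_ge0 q0); nra.
pose L := 2 * n%:R * (`|w| + 1 + `|p|) + 1.
have L0 : 0 < L.
  by rewrite /L; have := mulr_ge0 (mulr_ge0 (ler0n _ 2) n0) (addr_ge0 (addr_ge0 (normr_ge0 w) ler01) (normr_ge0 p)); lra.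
pose del := Num.min (Num.min 1 r2) (Num.min (r1 / K1) (g / 8 / L)).
exists del.
  by rewrite !lt_min ltr01 r20 !divr_gt0.
move=> x' p' xx' pp' hp'.
have [[d1 d2] [d3 d4]] : (`|x - x'| < 1 /\ `|x - x'| < r2) /\
    (`|x - x'| < r1 / K1 /\ `|x - x'| < g / 8 / L).
  by move: xx'; rewrite !lt_min => /andP[/andP[-> ->] /andP[-> ->]].
have [e3 e4] : `|p - p'| < r1 / K1 /\ `|p - p'| < g / 8 / L.
  by move: pp'; rewrite !lt_min => /andP[_ /andP[-> ->]].
have [_ ux'] := H2 x' d2.
pose eta' := tpt x' q0.
have heta : `|eta - eta'| < r1.
  rewrite etaE; apply: le_lt_trans (tpt_diff x x' q0) _.
  by rewrite -ltr_pdivlMr.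
have [Oeta' ueta'] := H1 eta' heta.
have := hp' eta' Oeta' (tpt_plane x' q0).
have -> : Pr1 eta' = q0 by [].
pose w' := q0 - Pr1 x'.
have ww : w' - w = (x - x').1 by rewrite /w' /w /Pr1 /=; rewrite opprB addrC addrA subrK.
have dd : dot2 p' w' - dot2 p w = dot2 (p' - p) w' + dot2 p (w' - w).
  by rewrite dot2Bl dot2Br; ring.
have nww : `|w' - w| <= `|x - x'| by rewrite ww pair_le1.
have nw' : `|w'| <= `|w| + 1.
  have : w' = w + (w' - w) by rewrite addrC subrK.
  move=> ->; have := ler_normD w (w' - w); lra.
have b1 := dot2_bound (p' - p) w'.
have b2 := dot2_bound p (w' - w).
have np : `|p' - p| = `|p - p'| by rewrite distrC.
have gn : 0 <= 2 * n%:R :> R by rewrite mulr_ge0.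
have t1 : `|p' - p| * `|w'| <= `|p - p'| * (`|w| + 1) by rewrite np ler_pM.
have c2 : `|p| * `|w' - w| <= `|p| * `|x - x'| by rewrite ler_pM.
have L1 : `|p - p'| * L < g / 8 by rewrite -ltr_pdivlMr.
have L2 : `|x - x'| * L < g / 8 by rewrite -ltr_pdivlMr.
have f1 := ler_wpM2l gn t1.
have f2 := ler_wpM2l gn c2.
move: b1 b2 ueta' ux'; rewrite !ler_norml !ltr_norml.
move=> /andP[b1l b1r] /andP[b2l b2r] /andP[u1 u2] /andP[u3 u4] hh.
have gp : 0 <= `|p - p'| by [].
have gx : 0 <= `|x - x'| by [].
have hw : 0 <= `|w| by [].
have hpn : 0 <= `|p| by [].
have m1 := mulr_ge0 gp (mulr_ge0 gn hpn).
have m2 := mulr_ge0 gx (mulr_ge0 gn (addr_ge0 hw ler01)).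
rewrite /L in L1 L2.
rewrite /g in g0 g4 u1 u2 u3 u4 L1 L2.
nra.
Qed.
Lemma near2_ball {U V : normedModType R} (s : U) (t : V) (Q : U -> V -> Prop) d :
  0 < d -> (forall s' t', `|s - s'| < d -> `|t - t'| < d -> Q s' t') ->
  \forall s' \near s & t' \near t, Q s' t'.
Proof.
move=> d0 H; exists (ball_ Num.norm s d, ball_ Num.norm t d) => /=.
  by split; apply/nbhs_normP; exists d.
by move=> [s' t'] /= [h1 h2]; exact: H.
Qed.

Lemma ball_nbhs {U : normedModType R} (s : U) d : 0 < d -> nbhs s (ball_ Num.norm s d).
Proof. by move=> d0; apply/nbhs_normP; exists d. Qed.

Lemma nbhs_ball_ex {U : normedModType R} (s : U) (P : U -> Prop) :
  (\forall t \near s, P t) -> exists2 d, 0 < d & forall t, `|s - t| < d -> P t.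
Proof. by move=> /nbhs_normP [d /= d0 H]; exists d => // t; apply: H. Qed.

Lemma dotv_le_sq (a : 'rV[R]_n) : dotv a a <= n%:R * `|a| ^+ 2.
Proof.
have -> : n%:R * `|a| ^+ 2 = \sum_(i < n) `|a| ^+ 2.
  by rewrite sumr_const card_ord mulr_natl.
rewrite /dotv; apply: ler_sum => i _.
apply: le_trans (ler_norm _) _; rewrite normrM expr2 ler_pM //; exact: rv_le.
Qed.

Lemma dist2n_small (p q : R2n R n) eps : 0 < eps ->
  `|p - q| * (n.+1)%:R < eps -> dist2n p q < eps.
Proof.
move=> e0 h; rewrite /dist2n.
set w := p - q.
have h1 := dotv_le_sq w.1; have h2 := dotv_le_sq w.2.
have a1 := pair_le1 w; have a2 := pair_le2 w.
have n0 : 0 <= n%:R :> R by [].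
have s1 : `|w.1| ^+ 2 <= `|w| ^+ 2 by rewrite lerXn2r // nnegrE.
have s2 : `|w.2| ^+ 2 <= `|w| ^+ 2 by rewrite lerXn2r // nnegrE.
have t1 := ler_wpM2l n0 s1; have t2 := ler_wpM2l n0 s2.
have gw : 0 <= `|w| by [].
have NE : (n.+1)%:R = n%:R + 1 :> R by rewrite -addn1 natrD.
have hD : dot2 w w <= (`|w| * (n.+1)%:R) ^+ 2.
  rewrite /dot2 NE; have := sqr_ge0 `|w|; rewrite !expr2 in s1 s2 t1 t2 *.
  have := mulr_ge0 n0 n0; have := mulr_ge0 (mulr_ge0 n0 n0) (mulr_ge0 gw gw).
  nra.
have hN : 0 <= `|w| * (n.+1)%:R by rewrite mulr_ge0.
apply: le_lt_trans h; rewrite -(ger0_norm hN) -sqrtr_sqr ler_sqrt //.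
Qed.

Definition boxv (M : R) := [set v : 'rV[R]_n | forall i, `[- M, M]%classic (v ord0 i)].

Lemma boxv_compact M : compact (boxv M).
Proof. by apply: (@rV_compact _ _ (fun=> `[- M, M]%classic)) => _; exact: segment_compact. Qed.

Lemma in_box M (p : R2n R n) : `|p| <= M -> (boxv M `*` boxv M) p.
Proof.
move=> hp; split => i /=; rewrite in_itv /= -ler_norml.
  exact: le_trans (rv_le _ _) (le_trans (pair_le1 _) hp).
exact: le_trans (rv_le _ _) (le_trans (pair_le2 _) hp).
Qed.
End S.

Theorem proposition2p2 (R : realType) (n : nat) (Omega : set (Hn R n))
    (u : Hn R n -> R) :
  open Omega ->
  {within Omega, continuous u} ->
  (forall xi, Omega xi -> hsubdiff Omega u xi !=set0) ->
  (forall xi, Omega xi -> usc_at Omega (hsubdiff Omega u) xi) /\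
  (forall K : set (Hn R n), compact K -> K `<=` Omega ->
     compact (hsubdiff_set Omega u K)).
Proof.
move=> oO cu _; split.
  move=> x Ox eps eps0.
  have [M [rho rho0 HB]] := locbound _ _ oO cu _ Ox.
  pose P := fun (x' : Hn R n) (p' : R2n R n) =>
    hsubdiff Omega u x' p' -> eps_nbhd (hsubdiff Omega u x) eps p'.
  have cB := compact_setX (@boxv_compact R n M) (@boxv_compact R n M).
  have HH : forall p, (boxv M `*` boxv M) p ->
      \forall p' \near p & x' \near x, P x' p'.
    move=> p _; case: (pselect (hsubdiff Omega u x p)) => hp.
      have N0 : 0 < (n.+1)%:R :> R by rewrite ltr0n.
      apply: (@near2_ball R _ _ p x _ (eps / (n.+1)%:R)); first by rewrite divr_gt0.
      move=> p' x' pp' _ _; exists p => //; apply: dist2n_small => //.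
      by rewrite -ltr_pdivlMr.
    have [del del0 Hd] := graph_open _ _ oO cu _ _ Ox hp.
    apply: (@near2_ball R _ _ p x _ del) => // p' x' pp' xx' hp'.
    by case: (Hd x' p' xx' pp').
  have := (compact_near_coveringP _).1 cB (Hn R n) (nbhs x) P _ HH.
  move=> /(_ _) H1.
  have H2 : \forall x' \near x, forall p, hsubdiff Omega u x' p -> `|p| <= M.
    by apply/nbhs_normP; exists rho => // x' /= h; exact: HB.
  have H3 : \forall x' \near x, ((boxv M `*` boxv M) `<=` P x') /\
      (forall p, hsubdiff Omega u x' p -> `|p| <= M) by exact: filterI.
  have [del del0 Hd] := nbhs_ball_ex _ _ H3.
  exists del => // x' Ox' dx' p' hp'.
  have [Hb1 Hb2] := Hd x' (le_lt_trans (norm_le_distH x x') dx').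
  exact: (Hb1 p' (in_box _ _ (Hb2 p' hp')) hp').
move=> K cK KO.
have HH : forall x, K x -> \forall x' \near x & M \near (pinfty_nbhs R),
    (fun M x' => forall p, hsubdiff Omega u x' p -> `|p| <= M) M x'.
  move=> x Kx; have [M0 [rho rho0 HB]] := locbound _ _ oO cu _ (KO x Kx).
  exists (ball_ Num.norm x rho, [set M | M0 < M]) => /=.
    split; first exact: ball_nbhs.
    by exists M0; split; [exact: num_real | move=> y].
  move=> [x' M] /= [hx hM] p hp.
  exact: le_trans (HB x' hx p hp) (ltW hM).
have := (compact_near_coveringP _).1 cK R (pinfty_nbhs R) _ _ HH.
move=> [M0 [_ HM]].
pose M := M0 + 1.
have HK := HM M ltac:(by rewrite /M ltrDl).
pose S := [set z : Hn R n * R2n R n | K z.1 /\ hsubdiff Omega u z.1 z.2].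
have -> : hsubdiff_set Omega u K = snd @` S.
  apply/seteqP; split.
    by move=> p [x Kx hp]; exists (x, p).
  by move=> p [[x q] [Kx hq] /= <-]; exists x.
apply: continuous_compact.
  by apply: continuous_subspaceT => z; exact: cvg_snd.
apply: (@subclosed_compact _ _ (K `*` (boxv M `*` boxv M))).
- move=> z clz.
  have Kz : K z.1.
    apply: (compact_closed (@norm_hausdorff _ _) cK) => B nB.
    have [d d0 Hd] := nbhs_ball_ex _ _ nB.
    have [w [[Kw _] Bw]] := clz _ (ball_nbhs z _ d0).
    exists w.1; split => //; apply: Hd.
    exact: le_lt_trans (pair_le1 (z - w)) Bw.
  split => //; apply: contrapT => hz.
  have [del del0 Hd] := graph_open _ _ oO cu _ _ (KO _ Kz) hz.
  have [w [[Kw hw] Bw]] := clz _ (ball_nbhs z _ del0).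
  apply: (Hd w.1 w.2) => //.
    exact: le_lt_trans (pair_le1 (z - w)) Bw.
  exact: le_lt_trans (pair_le2 (z - w)) Bw.
- exact: compact_setX cK (compact_setX (@boxv_compact R n M) (@boxv_compact R n M)).
- move=> [x p] [Kx hp]; split => //; apply: in_box.
  exact: (HK _ Kx p hp).
Qed.
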